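(* Let $A=(Q,\Sigma,\delta,q_0,F)$ be a nondeterministic finite automaton, and let $A'=(2^Q,\Sigma,\delta',\{q_0\},F')$ be the deterministic automaton obtained from $A$ by the powerset construction, i.e. $\delta'(P,a)=\bigcup_{p\in P}\delta(p,a)$ for $P\subseteq Q$, $a\in\Sigma$ (extended to words in the usual way), and $F'=\{P\subseteq Q\mid P\cap F\neq\emptyset\}$. Assume that the part of $A'$ reachable from $\{q_0\}$ is the minimal deterministic finite automaton equivalent to $A$, and that this automaton is not permutation-free. Suppose $n\ge 2$, that $P_0,P_1,\ldots,P_{n-1}\subseteq Q$ are pairwise distinct states of this automaton, and that a word $w\in\Sigma^*$ induces a non-trivial permutation on them, namely $\delta'(P_i,w)=P_{i+1}$ for $0\le i<n-1$ and $\delta'(P_{n-1},w)=P_0$. Then there are no two indices $i\neq j$ with $P_i\subseteq P_j$.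
   Context: A deterministic finite automaton is permutation-free if there is no word $w\in\Sigma^*$ that induces a non-trivial (i.e. non-identity) permutation of some subset of its set of states, where $w$ induces a permutation of a set $S$ of states if the map $q\mapsto \delta(q,w)$ restricts to a bijection of $S$. *)

(* Defs.v *)
From mathcomp Require Import all_boot.
Set Implicit Arguments. Unset Strict Implicit. Unset Printing Implicit Defensive.

Definition pstep (Q Sigma : finType) (delta : Q -> Sigma -> {set Q})
  (P : {set Q}) (a : Sigma) : {set Q} :=
  \bigcup_(p in P) delta p a.

Definition pdelta (Q Sigma : finType) (delta : Q -> Sigma -> {set Q})
  (P : {set Q}) (w : seq Sigma) : {set Q} :=
  foldl (pstep delta) P w.

Definition paccept (Q : finType) (F : {set Q}) (P : {set Q}) : bool :=
  P :&: F != set0.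

Definition preachable (Q Sigma : finType) (delta : Q -> Sigma -> {set Q})
  (q0 : Q) (P : {set Q}) : Prop :=
  exists w : seq Sigma, pdelta delta [set q0] w = P.

(* The reachable part of A' is the minimal DFA equivalent to A:
   (it is reachable by construction and) no two distinct reachable states
   are equivalent (Myhill-Nerode), i.e. every two distinct reachable states
   are distinguished by some word. *)
Definition reachable_part_minimal (Q Sigma : finType)
  (delta : Q -> Sigma -> {set Q}) (q0 : Q) (F : {set Q}) : Prop :=
  forall P R : {set Q},
    preachable delta q0 P -> preachable delta q0 R -> P <> R ->
    exists u : seq Sigma,
      paccept F (pdelta delta P u) != paccept F (pdelta delta R u).

Definition reachable_part_permutation_free (Q Sigma : finType)
  (delta : Q -> Sigma -> {set Q}) (q0 : Q) : Prop :=
  ~ exists (w : seq Sigma) (S : {set {set Q}}),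
      [/\ (forall P, P \in S -> preachable delta q0 P),
          (forall P, P \in S -> pdelta delta P w \in S),
          {in S &, injective (fun P => pdelta delta P w)},
          (forall R, R \in S -> exists2 P, P \in S & pdelta delta P w = R)
        & exists2 P, P \in S & pdelta delta P w <> P].

(* Main.v *)
Require Import Defs.
From mathcomp Require Import all_boot.
From mathcomp Require Import zify.

Lemma pstep_mono (Q Sigma : finType) (delta : Q -> Sigma -> {set Q}) (A B : {set Q}) a :
  A \subset B -> pstep delta A a \subset pstep delta B a.
Proof.
move=> sAB; apply/bigcupsP=> p pA.
by apply: (bigcup_sup p); apply: (subsetP sAB).
Qed.

Lemma pdelta_mono (Q Sigma : finType) (delta : Q -> Sigma -> {set Q}) u :
  forall A B : {set Q}, A \subset B -> pdelta delta A u \subset pdelta delta B u.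
Proof.
elim: u => [|a u IH] A B sAB //=.
rewrite /pdelta /=; apply: IH; exact: pstep_mono.
Qed.

Theorem mainTheorem1 (Q Sigma : finType) (delta : Q -> Sigma -> {set Q})
  (q0 : Q) (F : {set Q})
  (Hmin : reachable_part_minimal delta q0 F)
  (Hperm : ~ reachable_part_permutation_free delta q0)
  (n : nat) (Hn : 2 <= n) (P : nat -> {set Q}) (w : seq Sigma)
  (Hreach : forall i, i < n -> preachable delta q0 (P i))
  (Hdist : forall i j, i < n -> j < n -> i <> j -> P i <> P j)
  (Hstep : forall i, i < n.-1 -> pdelta delta (P i) w = P i.+1)
  (Hlast : pdelta delta (P n.-1) w = P 0) :
  ~ exists i j, [/\ i < n, j < n, i <> j & P i \subset P j].
Proof.
move=> [i [j [lti ltj nij sij]]].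
pose Pm k := P (k %% n).
have n0 : 0 < n by lia.
have HPm : forall k, pdelta delta (Pm k) w = Pm k.+1.
  move=> k; rewrite /Pm.
  have kl : k %% n < n by rewrite ltn_mod.
  case: (ltnP (k %% n) n.-1) => hk.
    have e : k.+1 %% n = (k %% n).+1.
      by rewrite -addn1 -modnDml addn1 modn_small //; lia.
    by rewrite Hstep // e.
  have kn : k %% n = n.-1 by lia.
  rewrite kn Hlast; congr P; rewrite -addn1 -modnDml kn.
  by rewrite (_ : n.-1 + 1 = n) ?modnn //; lia.
have shift : forall a b m, Pm a \subset Pm b -> Pm (a + m) \subset Pm (b + m).
  move=> a b m h; elim: m => [|m IH]; first by rewrite !addn0.
  by rewrite !addnS -!HPm; apply: pdelta_mono.
pose d := j + n - i.
have base : Pm i \subset Pm (i + d).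
  rewrite /Pm modn_small // (_ : i + d = j + n); last by rewrite /d; lia.
  by rewrite modnDr modn_small.
have chain : forall k, Pm (i + d) \subset Pm (i + k.+1 * d).
  elim=> [|k IH]; first by rewrite mul1n.
  apply: subset_trans IH _.
  have := shift _ _ (k.+1 * d) base.
  by rewrite (_ : i + d + k.+1 * d = i + k.+2 * d) //; lia.
have := chain n.-1.
rewrite prednK // /Pm (_ : i + d = j + n); last by rewrite /d; lia.
rewrite modnDr modn_small // (_ : i + n * d = d * n + i); last lia.
rewrite modnMDl modn_small // => sji.
by apply: (Hdist i j) => //; apply/eqP; rewrite eqEsubset sij sji.
Qed.
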